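(* Let $\mathcal{H}_S$ (system) and $\mathcal{H}_B$ (bath) be finite-dimensional Hilbert spaces, and fix a final time $T>0$. Let $t\mapsto \overline{H}_S(t)$ be a continuous family of Hermitian operators on $\mathcal{H}_S$, $H_B$ a Hermitian operator on $\mathcal{H}_B$, and $H_0(t)=\overline{H}_S(t)\otimes I+I\otimes H_B$. Let $H_{\mathrm{p}}$ be a time-independent Hermitian operator on $\mathcal{H}_S$ with spectral decomposition $H_{\mathrm{p}}=\sum_a\lambda_a\Pi_a$ (distinct eigenvalues $\lambda_a$, spectral projectors $\Pi_a$), let $E_{\mathrm{p}}>0$, and let $V$ be a time-independent Hermitian operator on $\mathcal{H}_S\otimes\mathcal{H}_B$. Let $\mathcal{I}$ be a set of indices of eigenvalues of $H_{\mathrm{p}}$, and set $$P=\sum_{a\in\mathcal{I}}\Pi_a,\qquad W=\sum_{a\in\mathcal{I}}\Pi_a V\Pi_a.$$ Assume that $[\overline{H}_S(t),P]=[\overline{H}_S(t),H_{\mathrm{p}}]=0$ for all $t\in[0,T]$. Let $U_V(T)$ and $U_W(T)$ be the unitary evolutions at time $T$ (solutions of $i\,\frac{d}{dt}U=H(t)U$, $U(0)=I$) generated by $H_V(t)=H_0(t)+E_{\mathrm{p}}H_{\mathrm{p}}+V$ and $H_W(t)=H_0(t)+E_{\mathrm{p}}H_{\mathrm{p}}+W$ respectively, i.e. $U_W(T)=\mathcal{T}\exp\left(-i\int_0^T(H_0(t)+E_{\mathrm{p}}H_{\mathrm{p}}+W)\,dt\right)$. Then for any unitarily invariant norm $\|\cdot\|$,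 $$\lim_{E_{\mathrm{p}}\to\infty}\big\|U_V(T)P-U_W(T)P\big\|=0.$$
   Context: All operators on $\mathcal{H}_S$ or $\mathcal{H}_B$ are regarded as operators on $\mathcal{H}_S\otimes\mathcal{H}_B$ by tensoring with the identity. $\mathcal{T}$ denotes time ordering. A norm is unitarily invariant if $\|UXV\|=\|X\|$ for all unitaries $U,V$. *)

(* Defs.v *)
From HB Require Import structures.
From mathcomp Require Import all_boot all_order all_algebra.
From mathcomp Require Import all_classical all_reals all_analysis.
From mathcomp Require Import complex mxtens.
Set Implicit Arguments. Unset Strict Implicit. Unset Printing Implicit Defensive.
Import Order.TTheory GRing.Theory Num.Theory.
Import numFieldNormedType.Exports.
Local Open Scope classical_set_scope.
Local Open Scope ring_scope.
Local Open Scope complex_scope.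

Section QDefs.
Variable R : realType.
Local Notation C := R[i].

Definition adjmx {m n : nat} (A : 'M[C]_(m, n)) : 'M[C]_(n, m) :=
  (map_mx (@conjc R) A)^T.

Definition hermitian_mx {n : nat} (A : 'M[C]_n) : Prop := adjmx A = A.

Definition unitary_mx {n : nat} (U : 'M[C]_n) : Prop :=
  U *m adjmx U = 1%:M /\ adjmx U *m U = 1%:M.

Definition liftS {dS dB : nat} (A : 'M[C]_dS) : 'M[C]_(dS * dB) :=
  tensmx A (1%:M : 'M[C]_dB).
Definition liftB {dS dB : nat} (B : 'M[C]_dB) : 'M[C]_(dS * dB) :=
  tensmx (1%:M : 'M[C]_dS) B.

Definition mx_continuous_on {m n : nat} (T : R) (F : R -> 'M[C]_(m, n)) : Prop :=
  forall i j,
    {within `[0, T], continuous (fun t => @complex.Re R (F t i j))} /\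
    {within `[0, T], continuous (fun t => @complex.Im R (F t i j))}.

(* U solves  i dU/dt = H(t) U,  U(0) = I  on [0,T]: U is continuous on
   [0,T] and differentiable on ]0,T[ with dU/dt = -i H(t) U(t)
   (entrywise, real and imaginary parts). *)
Definition schrodinger_solution {n : nat} (T : R) (H : R -> 'M[C]_n)
    (U : R -> 'M[C]_n) : Prop :=
  U 0 = 1%:M /\
  mx_continuous_on T U /\
  forall t, 0 < t < T -> forall i j,
    is_derive t 1 (fun s => @complex.Re R (U s i j)) (@complex.Re R ((- 'i *: (H t *m U t)) i j)) /\
    is_derive t 1 (fun s => @complex.Im R (U s i j)) (@complex.Im R ((- 'i *: (H t *m U t)) i j)).

Definition unitarily_invariant_norm {n : nat} (N : 'M[C]_n -> R) : Prop :=
  [/\ forall A, 0 <= N A,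
      forall A, N A = 0 -> A = 0,
      forall (c : C) A, N (c *: A) = ComplexField.Normc.normc c * N A,
      forall A B, N (A + B) <= N A + N B
    & forall U A V, unitary_mx U -> unitary_mx V -> N (U *m A *m V) = N A].

Definition spectral_decomposition {n k : nat} (H : 'M[C]_n)
    (lam : 'I_k -> R) (Pi : 'I_k -> 'M[C]_n) : Prop :=
  [/\ injective lam,
      forall a, hermitian_mx (Pi a) /\ Pi a *m Pi a = Pi a /\ Pi a != 0,
      forall a b, a != b -> Pi a *m Pi b = 0,
      \sum_a Pi a = 1%:M
    & H = \sum_a (lam a)%:C *: Pi a].

End QDefs.

(* Main.v *)
Require Import Defs.
From HB Require Import structures.
From mathcomp Require Import all_boot all_order all_algebra.
From mathcomp Require Import all_classical all_reals all_analysis.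
From mathcomp Require Import complex mxtens.
From mathcomp Require Import ring lra.
Set Implicit Arguments. Unset Strict Implicit. Unset Printing Implicit Defensive.
Import Order.TTheory GRing.Theory Num.Theory.
Import numFieldNormedType.Exports.
Local Open Scope classical_set_scope.
Local Open Scope ring_scope.
Local Open Scope complex_scope.


Section Norms.
Variable R : realType.
Local Notation C := R[i].
Local Notation Re := (@complex.Re R).
Local Notation Im := (@complex.Im R).

Definition sz (z : C) : R := `|Re z| + `|Im z|.

Lemma cReD (z w : C) : Re (z + w) = Re z + Re w.
Proof. by case: z => a b; case: w => c d. Qed.
Lemma cImD (z w : C) : Im (z + w) = Im z + Im w.
Proof. by case: z => a b; case: w => c d. Qed.
Lemma cReN (z : C) : Re (- z) = - Re z.
Proof. by case: z. Qed.
Lemma cImN (z : C) : Im (- z) = - Im z.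
Proof. by case: z. Qed.
Lemma cReM (z w : C) : Re (z * w) = Re z * Re w - Im z * Im w.
Proof. by case: z => a b; case: w => c d. Qed.
Lemma cImM (z w : C) : Im (z * w) = Re z * Im w + Im z * Re w.
Proof. by case: z => a b; case: w => c d. Qed.
Lemma cRe0 : Re 0 = 0. Proof. by []. Qed.
Lemma cIm0 : Im 0 = 0. Proof. by []. Qed.
Lemma cReJ (z : C) : Re (z^*) = Re z. Proof. by case: z. Qed.
Lemma cImJ (z : C) : Im (z^*) = - Im z. Proof. by case: z. Qed.
Lemma cRe_sum (I : Type) (r : seq I) (P : pred I) (F : I -> C) :
  Re (\sum_(i <- r | P i) F i) = \sum_(i <- r | P i) Re (F i).
Proof. by elim/big_rec2: _ => // i y1 y2 _ <-; rewrite cReD. Qed.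
Lemma cIm_sum (I : Type) (r : seq I) (P : pred I) (F : I -> C) :
  Im (\sum_(i <- r | P i) F i) = \sum_(i <- r | P i) Im (F i).
Proof. by elim/big_rec2: _ => // i y1 y2 _ <-; rewrite cImD. Qed.

Lemma complexP (z w : C) : Re z = Re w -> Im z = Im w -> z = w.
Proof. by case: z => a b; case: w => c d /= -> ->. Qed.

Lemma sz_ge0 z : 0 <= sz z.
Proof. by rewrite /sz addr_ge0. Qed.
Lemma sz0 : sz 0 = 0.
Proof. by rewrite /sz cRe0 cIm0 normr0 addr0. Qed.
Lemma szD z w : sz (z + w) <= sz z + sz w.
Proof.
rewrite /sz cReD cImD.
have h1 := ler_normD (Re z) (Re w); have h2 := ler_normD (Im z) (Im w).
lra.
Qed.
Lemma szN z : sz (- z) = sz z.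
Proof. by rewrite /sz cReN cImN !normrN. Qed.
Lemma szJ z : sz (z^*) = sz z.
Proof. by rewrite /sz cReJ cImJ normrN. Qed.
Lemma szM z w : sz (z * w) <= sz z * sz w.
Proof.
rewrite /sz cReM cImM.
have h1 := ler_normB (Re z * Re w) (Im z * Im w).
have h2 := ler_normD (Re z * Im w) (Im z * Re w).
rewrite !normrM in h1 h2.
have := normr_ge0 (Re z); have := normr_ge0 (Re w);
have := normr_ge0 (Im z); have := normr_ge0 (Im w).
nra.
Qed.
Lemma Re_le_sz z : `|Re z| <= sz z.
Proof. by rewrite /sz lerDl. Qed.
Lemma Im_le_sz z : `|Im z| <= sz z.
Proof. by rewrite /sz lerDr. Qed.
Lemma sz_sum (I : Type) (r : seq I) (P : pred I) (F : I -> C) :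
  sz (\sum_(i <- r | P i) F i) <= \sum_(i <- r | P i) sz (F i).
Proof.
elim/big_rec2: _ => [|i y1 y2 _ h]; first by rewrite sz0.
by apply: le_trans (szD _ _) _; rewrite lerD2l.
Qed.

Definition mnorm {m n : nat} (A : 'M[C]_(m, n)) : R :=
  \sum_i \sum_j sz (A i j).

Lemma mnorm_ge0 m n (A : 'M[C]_(m,n)) : 0 <= mnorm A.
Proof. by apply: sumr_ge0 => i _; apply: sumr_ge0 => j _; apply: sz_ge0. Qed.

Lemma mnorm0 m n : mnorm (0 : 'M[C]_(m,n)) = 0.
Proof. by apply: big1 => i _; apply: big1 => j _; rewrite mxE sz0. Qed.

Lemma mnormD m n (A B : 'M[C]_(m,n)) : mnorm (A + B) <= mnorm A + mnorm B.
Proof.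
rewrite /mnorm -big_split /=; apply: ler_sum => i _.
rewrite -big_split /=; apply: ler_sum => j _; rewrite mxE; exact: szD.
Qed.

Lemma mnormN m n (A : 'M[C]_(m,n)) : mnorm (- A) = mnorm A.
Proof. by apply: eq_bigr => i _; apply: eq_bigr => j _; rewrite mxE szN. Qed.

Lemma mnormB m n (A B : 'M[C]_(m,n)) : mnorm (A - B) <= mnorm A + mnorm B.
Proof. by have h := mnormD A (- B); rewrite mnormN in h. Qed.

Lemma sz_le_mnorm m n (A : 'M[C]_(m,n)) i j : sz (A i j) <= mnorm A.
Proof.
rewrite /mnorm (bigD1 i) //= (bigD1 j) //=.
have h1 : 0 <= \sum_(j0 | j0 != j) sz (A i j0) by apply: sumr_ge0 => *; apply: sz_ge0.
have h2 : 0 <= \sum_(i0 | i0 != i) \sum_j sz (A i0 j).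
  by apply: sumr_ge0 => *; apply: sumr_ge0 => *; apply: sz_ge0.
lra.
Qed.

Lemma Re_le_mnorm m n (A : 'M[C]_(m,n)) i j : `|Re (A i j)| <= mnorm A.
Proof. apply: le_trans (Re_le_sz _) (sz_le_mnorm A i j). Qed.
Lemma Im_le_mnorm m n (A : 'M[C]_(m,n)) i j : `|Im (A i j)| <= mnorm A.
Proof. apply: le_trans (Im_le_sz _) (sz_le_mnorm A i j). Qed.

Lemma mnormM m n p (A : 'M[C]_(m,n)) (B : 'M[C]_(n,p)) :
  mnorm (A *m B) <= mnorm A * mnorm B.
Proof.
rewrite /mnorm mulr_suml.
apply: ler_sum => i _.
apply: (@le_trans _ _ (\sum_j \sum_k sz (A i k) * sz (B k j))).
  apply: ler_sum => j _; rewrite mxE; apply: le_trans (sz_sum _ _ _) _.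
  by apply: ler_sum => k _; apply: szM.
rewrite exchange_big /= mulr_suml; apply: ler_sum => k _.
rewrite -mulr_sumr; apply: ler_wpM2l; first exact: sz_ge0.
rewrite (bigD1 k) //= lerDl; apply: sumr_ge0 => *; apply: sumr_ge0 => *.
exact: sz_ge0.
Qed.

Lemma mnormZ m n (c : C) (A : 'M[C]_(m,n)) : mnorm (c *: A) <= sz c * mnorm A.
Proof.
rewrite /mnorm mulr_sumr; apply: ler_sum => i _; rewrite mulr_sumr.
by apply: ler_sum => j _; rewrite mxE; apply: szM.
Qed.

Lemma mnorm_adj m n (A : 'M[C]_(m,n)) : mnorm (adjmx A) = mnorm A.
Proof.
rewrite /mnorm exchange_big /=; apply: eq_bigr => i _; apply: eq_bigr => j _.
by rewrite /adjmx !mxE szJ.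
Qed.

Lemma mnorm_sum m n (I : Type) (r : seq I) (P : pred I) (F : I -> 'M[C]_(m,n)) :
  mnorm (\sum_(i <- r | P i) F i) <= \sum_(i <- r | P i) mnorm (F i).
Proof.
elim/big_rec2: _ => [|i y1 y2 _ h]; first by rewrite mnorm0.
by apply: le_trans (mnormD _ _) _; rewrite lerD2l.
Qed.

Lemma mnorm_le_entries m n (A : 'M[C]_(m,n)) (e : R) :
  (forall i j, `|Re (A i j)| <= e /\ `|Im (A i j)| <= e) ->
  mnorm A <= (m * n)%:R * (2 * e).
Proof.
move=> h; rewrite /mnorm.
apply: (@le_trans _ _ (\sum_(i < m) \sum_(j < n) (2 * e))).
  apply: ler_sum => i _; apply: ler_sum => j _; rewrite /sz.
  have [h1 h2] := h i j; lra.
set f := 2 * e; by rewrite !sumr_const !card_ord -mulrnA mulr_natl mulnC.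
Qed.

Lemma mnorm_eq0 m n (A : 'M[C]_(m,n)) : mnorm A <= 0 -> A = 0.
Proof.
move=> h; apply/matrixP => i j; rewrite mxE.
have := sz_le_mnorm A i j; rewrite /sz => h1.
have := normr_ge0 (Re (A i j)); have := normr_ge0 (Im (A i j)) => h2 h3.
apply: complexP; rewrite ?cRe0 ?cIm0; apply/normr0_eq0; lra.
Qed.

End Norms.


Section Calc.
Variable R : realType.
Local Notation C := R[i].
Local Notation Re := (@complex.Re R).
Local Notation Im := (@complex.Im R).

Section WC.
Variable A : set R.
Lemma wc_mul (f g : R -> R) : {within A, continuous f} -> {within A, continuous g} ->
  {within A, continuous (fun t => f t * g t)}.
Proof. move=> hf hg x; apply: continuousM; [exact: hf | exact: hg]. Qed.
Lemma wc_add (f g : R -> R) : {within A, continuous f} -> {within A, continuous g} ->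
  {within A, continuous (fun t => f t + g t)}.
Proof. move=> hf hg x; apply: continuousD; [exact: hf | exact: hg]. Qed.
Lemma wc_opp (f : R -> R) : {within A, continuous f} ->
  {within A, continuous (fun t => - f t)}.
Proof. move=> hf x; apply: continuousN; exact: hf. Qed.
Lemma wc_cst (c : R) : {within A, continuous (fun _ : R => c)}.
Proof. move=> x; exact: cst_continuous. Qed.
Lemma wc_ext (f g : R -> R) : (forall t, f t = g t) -> {within A, continuous f} ->
  {within A, continuous g}.
Proof. by move=> e; have -> : f = g by apply: funext. Qed.
Lemma wc_sub (f g : R -> R) : {within A, continuous f} -> {within A, continuous g} ->
  {within A, continuous (fun t => f t - g t)}.
Proof. by move=> hf hg; apply: wc_add => //; apply: wc_opp. Qed.
End WC.

Variable T : R.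

Definition ccont (f : R -> C) :=
  {within `[0, T], continuous (fun t => Re (f t))} /\
  {within `[0, T], continuous (fun t => Im (f t))}.

Lemma ccont_cst c : ccont (fun _ => c).
Proof. by split; apply: wc_cst. Qed.

Lemma ccont_add f g : ccont f -> ccont g -> ccont (fun t => f t + g t).
Proof.
move=> [f1 f2] [g1 g2]; split.
  by apply: (wc_ext (fun t => esym (cReD (f t) (g t)))); apply: wc_add.
by apply: (wc_ext (fun t => esym (cImD (f t) (g t)))); apply: wc_add.
Qed.

Lemma ccont_opp f : ccont f -> ccont (fun t => - f t).
Proof.
move=> [f1 f2]; split.
  by apply: (wc_ext (fun t => esym (cReN _))); apply: wc_opp.
by apply: (wc_ext (fun t => esym (cImN _))); apply: wc_opp.
Qed.

Lemma ccont_mul f g : ccont f -> ccont g -> ccont (fun t => f t * g t).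
Proof.
move=> [f1 f2] [g1 g2]; split.
  by apply: (wc_ext (fun t => esym (cReM (f t) (g t)))); apply: wc_sub; apply: wc_mul.
by apply: (wc_ext (fun t => esym (cImM (f t) (g t)))); apply: wc_add; apply: wc_mul.
Qed.

Lemma ccont_conj f : ccont f -> ccont (fun t => (f t)^*).
Proof.
move=> [f1 f2]; split.
  by apply: (wc_ext (fun t => esym (cReJ _))).
by apply: (wc_ext (fun t => esym (cImJ _))); apply: wc_opp.
Qed.

Lemma ccont_sum n (F : 'I_n -> R -> C) : (forall k, ccont (F k)) ->
  ccont (fun t => \sum_k F k t).
Proof.
elim: n F => [|n IH] F h.
  have -> : (fun t => \sum_(k < 0) F k t) = (fun _ => 0).
    by apply: funext => t; rewrite big_ord0.
  exact: ccont_cst.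
have -> : (fun t => \sum_(k < n.+1) F k t) =
  (fun t => \sum_(k < n) F (widen_ord (leqnSn n) k) t + F ord_max t).
  by apply: funext => t; rewrite big_ord_recr.
by apply: ccont_add => //; apply: IH.
Qed.

Definition mxcont {m n} (F : R -> 'M[C]_(m,n)) := forall i j, ccont (fun t => F t i j).

Lemma mxcontE m n (F : R -> 'M[C]_(m,n)) : mx_continuous_on T F <-> mxcont F.
Proof. by []. Qed.

Lemma mxcont_cst m n (A : 'M[C]_(m,n)) : mxcont (fun _ => A).
Proof. by move=> i j; apply: ccont_cst. Qed.

Lemma mxcont_add m n (F G : R -> 'M[C]_(m,n)) : mxcont F -> mxcont G -> mxcont (fun t => F t + G t).
Proof.
move=> hF hG i j.
have -> : (fun t => (F t + G t) i j) = (fun t => F t i j + G t i j).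
  by apply: funext => t; rewrite mxE.
exact: ccont_add.
Qed.

Lemma mxcont_opp m n (F : R -> 'M[C]_(m,n)) : mxcont F -> mxcont (fun t => - F t).
Proof.
move=> hF i j; have -> : (fun t => (- F t) i j) = (fun t => - F t i j).
  by apply: funext => t; rewrite mxE.
exact: ccont_opp.
Qed.

Lemma mxcont_mul m n p (F : R -> 'M[C]_(m,n)) (G : R -> 'M[C]_(n,p)) :
  mxcont F -> mxcont G -> mxcont (fun t => F t *m G t).
Proof.
move=> hF hG i j.
have -> : (fun t => (F t *m G t) i j) = (fun t => \sum_k F t i k * G t k j).
  by apply: funext => t; rewrite mxE.
by apply: ccont_sum => k; apply: ccont_mul.
Qed.

Lemma mxcont_adj m n (F : R -> 'M[C]_(m,n)) : mxcont F -> mxcont (fun t => adjmx (F t)).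
Proof.
move=> hF i j.
have -> : (fun t => (adjmx (F t)) i j) = (fun t => (F t j i)^*).
  by apply: funext => t; rewrite /adjmx !mxE.
exact: ccont_conj.
Qed.

Lemma mxcont_scale m n (c : C) (F : R -> 'M[C]_(m,n)) : mxcont F -> mxcont (fun t => c *: F t).
Proof.
move=> hF i j.
have -> : (fun t => (c *: F t) i j) = (fun t => c * F t i j).
  by apply: funext => t; rewrite mxE.
by apply: ccont_mul => //; apply: ccont_cst.
Qed.

Definition cder (t : R) (f : R -> C) (d : C) :=
  is_derive t 1 (fun s => Re (f s)) (Re d) /\ is_derive t 1 (fun s => Im (f s)) (Im d).

Lemma cder_cst t c : cder t (fun _ => c) 0.
Proof. by split; rewrite ?cRe0 ?cIm0; apply: is_derive_cst. Qed.

Lemma cder_add t f g df dg : cder t f df -> cder t g dg -> cder t (fun s => f s + g s) (df + dg).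
Proof.
move=> [f1 f2] [g1 g2]; split.
  rewrite cReD; under eq_fun do rewrite cReD.
  exact: is_deriveD.
rewrite cImD; under eq_fun do rewrite cImD.
exact: is_deriveD.
Qed.

Lemma cder_opp t f df : cder t f df -> cder t (fun s => - f s) (- df).
Proof.
move=> [f1 f2]; split.
  rewrite cReN; under eq_fun do rewrite cReN.
  exact: is_deriveN.
rewrite cImN; under eq_fun do rewrite cImN.
exact: is_deriveN.
Qed.

Lemma cder_mul t f g df dg : cder t f df -> cder t g dg ->
  cder t (fun s => f s * g s) (f t * dg + df * g t).
Proof.
move=> [f1 f2] [g1 g2]; split.
  under eq_fun do rewrite cReM.
  have h := is_deriveB (is_deriveM f1 g1) (is_deriveM f2 g2).
  apply: is_derive_eq h _.
  rewrite cReD !cReM /=; rewrite /GRing.scale /=; ring.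
under eq_fun do rewrite cImM.
have h := is_deriveD (is_deriveM f1 g2) (is_deriveM f2 g1).
apply: is_derive_eq h _.
rewrite cImD !cImM /=; rewrite /GRing.scale /=; ring.
Qed.

Lemma cder_conj t f df : cder t f df -> cder t (fun s => (f s)^*) (df^*).
Proof.
move=> [f1 f2]; split.
  by rewrite cReJ; under eq_fun do rewrite cReJ.
rewrite cImJ; under eq_fun do rewrite cImJ.
exact: is_deriveN.
Qed.

Lemma cder_sum t n (F : 'I_n -> R -> C) (dF : 'I_n -> C) :
  (forall k, cder t (F k) (dF k)) -> cder t (fun s => \sum_k F k s) (\sum_k dF k).
Proof.
move=> h; split.
  rewrite cRe_sum; under eq_fun do rewrite cRe_sum.
  have := @is_derive_sum _ _ _ n (fun k s => Re (F k s)) t 1 (fun k => Re (dF k)).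
  move=> H; have {}H := H (fun k => (h k).1).
  apply: is_derive_eq _ _; last reflexivity.
  suff -> : (fun s => \sum_(k < n) Re (F k s)) = \sum_(k < n) (fun s => Re (F k s)) by [].
  by apply: funext => s; rewrite fct_sumE.
rewrite cIm_sum; under eq_fun do rewrite cIm_sum.
have := @is_derive_sum _ _ _ n (fun k s => Im (F k s)) t 1 (fun k => Im (dF k)).
move=> H; have {}H := H (fun k => (h k).2).
apply: is_derive_eq _ _; last reflexivity.
suff -> : (fun s => \sum_(k < n) Im (F k s)) = \sum_(k < n) (fun s => Im (F k s)) by [].
by apply: funext => s; rewrite fct_sumE.
Qed.


Definition mxder {m n} (t : R) (F : R -> 'M[C]_(m,n)) (D : 'M[C]_(m,n)) :=
  forall i j, cder t (fun s => F s i j) (D i j).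

Lemma cder_ext t f g d : (forall s, f s = g s) -> cder t f d -> cder t g d.
Proof. by move=> e; have -> : f = g by apply: funext. Qed.

Lemma mxder_cst m n t (A : 'M[C]_(m,n)) : mxder t (fun _ => A) 0.
Proof. by move=> i j; rewrite mxE; apply: cder_cst. Qed.

Lemma mxder_add m n t (F G : R -> 'M[C]_(m,n)) DF DG :
  mxder t F DF -> mxder t G DG -> mxder t (fun s => F s + G s) (DF + DG).
Proof.
move=> hF hG i j; rewrite mxE.
apply: (cder_ext (f := fun s => F s i j + G s i j)); first by move=> s; rewrite mxE.
exact: cder_add.
Qed.

Lemma mxder_opp m n t (F : R -> 'M[C]_(m,n)) DF :
  mxder t F DF -> mxder t (fun s => - F s) (- DF).
Proof.
move=> hF i j; rewrite mxE.
apply: (cder_ext (f := fun s => - F s i j)); first by move=> s; rewrite mxE.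
exact: cder_opp.
Qed.

Lemma mxder_mul m n p t (F : R -> 'M[C]_(m,n)) (G : R -> 'M[C]_(n,p)) DF DG :
  mxder t F DF -> mxder t G DG -> mxder t (fun s => F s *m G s) (F t *m DG + DF *m G t).
Proof.
move=> hF hG i j.
have -> : (F t *m DG + DF *m G t) i j = \sum_k (F t i k * DG k j + DF i k * G t k j).
  by rewrite !mxE -big_split.
apply: (cder_ext (f := fun s => \sum_k F s i k * G s k j)); first by move=> s; rewrite mxE.
by apply: cder_sum => k; apply: cder_mul.
Qed.

Lemma mxder_adj m n t (F : R -> 'M[C]_(m,n)) DF :
  mxder t F DF -> mxder t (fun s => adjmx (F s)) (adjmx DF).
Proof.
move=> hF i j; rewrite /adjmx !mxE.
apply: (cder_ext (f := fun s => (F s j i)^*)); first by move=> s; rewrite !mxE.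
exact: cder_conj.
Qed.

Lemma mxder_scale m n t (c : C) (F : R -> 'M[C]_(m,n)) DF :
  mxder t F DF -> mxder t (fun s => c *: F s) (c *: DF).
Proof.
move=> hF i j; rewrite mxE.
apply: (cder_ext (f := fun s => c * F s i j)); first by move=> s; rewrite mxE.
have := cder_mul (cder_cst t c) (hF i j); rewrite mul0r addr0 //.
Qed.

Lemma mxder_eq m n t (F : R -> 'M[C]_(m,n)) D1 D2 : D1 = D2 -> mxder t F D1 -> mxder t F D2.
Proof. by move=> ->. Qed.

Lemma mxder_bound m n (F : R -> 'M[C]_(m,n)) (D : R -> 'M[C]_(m,n)) (M : R) :
  mxcont F -> (forall t, 0 < t < T -> mxder t F (D t)) ->
  (forall t, 0 < t < T -> mnorm (D t) <= M) ->
  forall t, 0 <= t <= T -> mnorm (F t - F 0) <= (m * n)%:R * (2 * (M * t)).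
Proof.
move=> hc hd hb t /andP[t0 tT].
apply: mnorm_le_entries => i j.
have [->|tpos] := eqVneq t 0.
  by rewrite subrr mxE cRe0 cIm0 normr0 mulr0.
have t0' : 0 < t by rewrite lt_def tpos t0.
have sub : `[0, t] `<=` `[0, T].
  move=> x /=; rewrite !in_itv /= => /andP[h1 h2]; rewrite h1 /=.
  exact: le_trans h2 tT.
have hder : forall x, x \in `]0, t[ -> 0 < x < T.
  move=> x; rewrite in_itv /= => /andP[h1 h2]; rewrite h1 /=.
  exact: lt_le_trans h2 tT.
have [c1 c2] := hc i j.
split.
  rewrite !mxE cReD cReN.
  have [c cin ->] := @MVT R (fun s => complex.Re (F s i j)) (fun s => complex.Re (D s i j)) 0 t t0'
    (fun x hx => ((hd x (hder x hx)) i j).1) (continuous_subspaceW sub c1).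
  have hM := hb c (hder c cin).
  have := Re_le_mnorm (D c) i j.
  rewrite subr0 normrM (ger0_norm t0) => h.
  apply: ler_wpM2r => //; exact: le_trans h hM.
rewrite !mxE cImD cImN.
have [c cin ->] := @MVT R (fun s => complex.Im (F s i j)) (fun s => complex.Im (D s i j)) 0 t t0'
  (fun x hx => ((hd x (hder x hx)) i j).2) (continuous_subspaceW sub c2).
have hM := hb c (hder c cin).
have := Im_le_mnorm (D c) i j.
rewrite subr0 normrM (ger0_norm t0) => h.
apply: ler_wpM2r => //; exact: le_trans h hM.
Qed.

Lemma mxder_const m n (F : R -> 'M[C]_(m,n)) :
  mxcont F -> (forall t, 0 < t < T -> mxder t F 0) ->
  forall t, 0 <= t <= T -> F t = F 0.
Proof.
move=> hc hd t ht.
have hb : forall s, 0 < s < T -> mnorm ((fun _ => 0 : 'M[C]_(m,n)) s) <= 0.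
  by move=> s _; rewrite mnorm0.
have := @mxder_bound m n F (fun _ => 0) 0 hc hd hb t ht.
rewrite mul0r mulr0 mulr0 => /mnorm_eq0 /eqP; rewrite subr_eq0 => /eqP //.
Qed.

End Calc.


Section Alg.
Variable R : realType.
Local Notation C := R[i].

Lemma adjmxD m n (A B : 'M[C]_(m,n)) : adjmx (A + B) = adjmx A + adjmx B.
Proof. by apply/matrixP => i j; rewrite /adjmx !mxE rmorphD. Qed.
Lemma adjmxN m n (A : 'M[C]_(m,n)) : adjmx (- A) = - adjmx A.
Proof. by apply/matrixP => i j; rewrite /adjmx !mxE rmorphN. Qed.
Lemma adjmxB m n (A B : 'M[C]_(m,n)) : adjmx (A - B) = adjmx A - adjmx B.
Proof. by rewrite adjmxD adjmxN. Qed.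
Lemma adjmxZ m n (c : C) (A : 'M[C]_(m,n)) : adjmx (c *: A) = c^* *: adjmx A.
Proof. by apply/matrixP => i j; rewrite /adjmx !mxE rmorphM. Qed.
Lemma adjmxM m n p (A : 'M[C]_(m,n)) (B : 'M[C]_(n,p)) :
  adjmx (A *m B) = adjmx B *m adjmx A.
Proof. by rewrite /adjmx map_mxM trmx_mul. Qed.
Lemma adjmxK m n (A : 'M[C]_(m,n)) : adjmx (adjmx A) = A.
Proof. by apply/matrixP => i j; rewrite /adjmx !mxE conjcK. Qed.
Lemma adjmx1 n : adjmx (1%:M : 'M[C]_n) = 1%:M.
Proof. by apply/matrixP => i j; rewrite /adjmx !mxE rmorphMn rmorph1 eq_sym. Qed.
Lemma adjmx0 m n : adjmx (0 : 'M[C]_(m,n)) = 0.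
Proof. by apply/matrixP => i j; rewrite /adjmx !mxE conjc0. Qed.
Lemma adjmx_sum m n (I : Type) (r : seq I) (P : pred I) (F : I -> 'M[C]_(m,n)) :
  adjmx (\sum_(i <- r | P i) F i) = \sum_(i <- r | P i) adjmx (F i).
Proof.
elim/big_rec2: _ => [|i y1 y2 _ <-]; first exact: adjmx0.
by rewrite adjmxD.
Qed.

Section Lift.
Variables dS dB : nat.
Local Notation L := (@liftS R dS dB).

Lemma liftSE (A : 'M[C]_dS) i j :
  L A i j = A (mxtens_unindex i).1 (mxtens_unindex j).1 *
            (1%:M : 'M[C]_dB) (mxtens_unindex i).2 (mxtens_unindex j).2.
Proof. by rewrite /liftS /tensmx mxE. Qed.

Lemma liftSD A B : L (A + B) = L A + L B.
Proof. by apply/matrixP => i j; rewrite [RHS]mxE !liftSE mxE mulrDl. Qed.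
Lemma liftSN A : L (- A) = - L A.
Proof. by apply/matrixP => i j; rewrite [RHS]mxE !liftSE mxE mulNr. Qed.
Lemma liftSB A B : L (A - B) = L A - L B.
Proof. by rewrite liftSD liftSN. Qed.
Lemma liftSZ c A : L (c *: A) = c *: L A.
Proof. by apply/matrixP => i j; rewrite [RHS]mxE !liftSE mxE mulrA. Qed.
Lemma liftS0 : L 0 = 0.
Proof. by apply/matrixP => i j; rewrite [RHS]mxE !liftSE mxE mul0r. Qed.
Lemma liftS_sum (I : Type) (r : seq I) (P : pred I) (F : I -> 'M[C]_dS) :
  L (\sum_(i <- r | P i) F i) = \sum_(i <- r | P i) L (F i).
Proof.
elim/big_rec2: _ => [|i y1 y2 _ <-]; first exact: liftS0.
by rewrite liftSD.
Qed.
Lemma liftSM A B : L (A *m B) = L A *m L B.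
Proof. by rewrite /liftS tensmx_mul mulmx1. Qed.
Lemma liftS1 : L 1%:M = 1%:M.
Proof.
apply/matrixP => i j.
case: (mxtens_indexP i) => i1 i2; case: (mxtens_indexP j) => j1 j2.
rewrite /liftS tensmxE !mxE.
rewrite (inj_eq (can_inj (@mxtens_indexK _ _))) xpair_eqE.
by case: (i1 == j1); case: (i2 == j2); rewrite /= ?mulr1 ?mulr0 ?mul0r.
Qed.
Lemma liftS_adj A : adjmx (L A) = L (adjmx A).
Proof. by rewrite /adjmx /liftS map_mxT trmx_tens -/(adjmx 1%:M) adjmx1. Qed.
Lemma liftB_adj B : adjmx (@liftB R dS dB B) = @liftB R dS dB (adjmx B).
Proof. by rewrite /adjmx /liftB map_mxT trmx_tens -/(adjmx 1%:M) adjmx1. Qed.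
Lemma liftBS_comm B A : @liftB R dS dB B *m L A = L A *m @liftB R dS dB B.
Proof. by rewrite /liftB /liftS !tensmx_mul mul1mx mulmx1 mul1mx mulmx1. Qed.
End Lift.

End Alg.


Section Spec.
Variables (R : realType) (dS dB k : nat).
Local Notation C := R[i].
Variables (Hp : 'M[C]_dS) (lam : 'I_k -> R) (Pi : 'I_k -> 'M[C]_dS)
  (V : 'M[C]_(dS * dB)) (I : {set 'I_k}).
Hypothesis hsp : spectral_decomposition Hp lam Pi.
Hypothesis hV : hermitian_mx V.
Local Notation L := (@liftS R dS dB).
Local Notation P := (\sum_(a in I) Pi a).
Local Notation W := (\sum_(a in I) (L (Pi a) *m V *m L (Pi a))).

Lemma sum_if_eq (M : 'M[C]_dS) b :
  \sum_(a in I) (if a == b then M else 0) = if b \in I then M else 0.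
Proof.
case: ifP => bI.
  rewrite (bigD1 b) //= eqxx big1 ?addr0 // => a /andP[_ /negbTE ->] //.
by apply: big1 => a aI; case: eqP => // eab; rewrite eab bI in aI.
Qed.

Lemma PiPi a b : Pi a *m Pi b = if a == b then Pi a else 0.
Proof.
case: hsp => _ h1 h2 _ _; case: eqP => [<-|/eqP ne]; first by case: (h1 a) => _ [].
exact: h2.
Qed.

Lemma Pi_adj a : adjmx (Pi a) = Pi a.
Proof. by case: hsp => _ h1 _ _ _; case: (h1 a). Qed.

Lemma PPi b : P *m Pi b = if b \in I then Pi b else 0.
Proof.
rewrite mulmx_suml.
under eq_bigr do rewrite PiPi.
rewrite -sum_if_eq; apply: eq_bigr => a _.
by case: eqP => // ->.
Qed.

Lemma PiP b : Pi b *m P = if b \in I then Pi b else 0.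
Proof.
rewrite mulmx_sumr.
under eq_bigr do rewrite PiPi.
rewrite -sum_if_eq; apply: eq_bigr => a _.
by rewrite eq_sym; case: eqP => // ->.
Qed.

Lemma PP : P *m P = P.
Proof.
rewrite mulmx_sumr; apply: eq_bigr => b bI.
by rewrite PPi bI.
Qed.

Lemma P_adj : adjmx P = P.
Proof. by rewrite adjmx_sum; apply: eq_bigr => a _; rewrite Pi_adj. Qed.

Lemma sumPi : \sum_a Pi a = 1%:M.
Proof. by case: hsp. Qed.

Lemma HpPi b : Hp *m Pi b = (lam b)%:C *: Pi b.
Proof.
case: hsp => _ _ _ _ ->.
rewrite mulmx_suml (bigD1 b) //= big1 ?addr0.
  by rewrite -scalemxAl PiPi eqxx.
by move=> a /negbTE ne; rewrite -scalemxAl PiPi ne scaler0.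
Qed.

Lemma PiHp b : Pi b *m Hp = (lam b)%:C *: Pi b.
Proof.
case: hsp => _ _ _ _ ->.
rewrite mulmx_sumr (bigD1 b) //= big1 ?addr0.
  by rewrite -scalemxAr PiPi eqxx.
by move=> a; rewrite eq_sym => /negbTE ne; rewrite -scalemxAr PiPi ne scaler0.
Qed.

Lemma HpP : Hp *m P = P *m Hp.
Proof.
rewrite mulmx_sumr mulmx_suml; apply: eq_bigr => a _.
by rewrite HpPi PiHp.
Qed.

Lemma pPi b : L P *m L (Pi b) = if b \in I then L (Pi b) else 0.
Proof. by rewrite -liftSM PPi; case: ifP => //; rewrite liftS0. Qed.
Lemma Pip b : L (Pi b) *m L P = if b \in I then L (Pi b) else 0.
Proof. by rewrite -liftSM PiP; case: ifP => //; rewrite liftS0. Qed.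

Lemma pp : L P *m L P = L P.
Proof. by rewrite -liftSM PP. Qed.

Lemma p_adj : adjmx (L P) = L P.
Proof. by rewrite liftS_adj P_adj. Qed.

Lemma pW : L P *m W = W.
Proof.
rewrite mulmx_sumr; apply: eq_bigr => a aI.
by rewrite !mulmxA pPi aI.
Qed.

Lemma Wp : W *m L P = W.
Proof.
rewrite mulmx_suml; apply: eq_bigr => a aI.
by rewrite -mulmxA Pip aI.
Qed.

Lemma W_adj : adjmx W = W.
Proof.
rewrite adjmx_sum; apply: eq_bigr => a _.
by rewrite !adjmxM liftS_adj Pi_adj hV mulmxA.
Qed.

Definition Xh : 'M[C]_(dS * dB) :=
  \sum_(a in I) \sum_(b | b != a) ((lam a - lam b)^-1)%:C *: (L (Pi a) *m V *m L (Pi b)).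

Lemma LHpPi b : L Hp *m L (Pi b) = (lam b)%:C *: L (Pi b).
Proof. by rewrite -liftSM HpPi liftSZ. Qed.
Lemma LPiHp b : L (Pi b) *m L Hp = (lam b)%:C *: L (Pi b).
Proof. by rewrite -liftSM PiHp liftSZ. Qed.

Lemma Xh_key : L Hp *m Xh - Xh *m L Hp = L P *m V - W.
Proof.
have inj : injective lam by case: hsp.
rewrite /Xh mulmx_sumr mulmx_suml -sumrB liftS_sum mulmx_suml -sumrB.
apply: eq_bigr => a aI.
rewrite mulmx_sumr mulmx_suml -sumrB.
have -> : L (Pi a) *m V - L (Pi a) *m V *m L (Pi a) =
    \sum_(b | b != a) L (Pi a) *m V *m L (Pi b).
  rewrite -{1}[L (Pi a) *m V]mulmx1 -liftS1 -sumPi liftS_sum mulmx_sumr.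
  by rewrite (bigD1 a) //= addrAC subrr add0r.
apply: eq_bigr => b ba.
rewrite -scalemxAr -scalemxAl !mulmxA LHpPi -!mulmxA LPiHp.
rewrite -!scalemxAl -!scalemxAr !scalerA -scalerBl !mulmxA.
rewrite -rmorphM -rmorphM -rmorphB /= -mulrBr mulrC divff ?scale1r //.
by rewrite subr_eq0; apply/eqP => /inj /eqP; rewrite eq_sym (negbTE ba).
Qed.

End Spec.


Section Unit.
Variable R : realType.
Local Notation C := R[i].

Lemma conj_negi : Num.conj (- 'i) = 'i :> C.
Proof. change (conjc (- 'i%C) = 'i%C :> R[i]). by rewrite /= oppr0 opprK. Qed.

Lemma Re_normsq (z : C) : complex.Re (z^* * z) = complex.Re z ^+ 2 + complex.Im z ^+ 2.
Proof. by case: z => a b /=; rewrite -!expr2 mulNr opprK. Qed.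

Lemma unitary_bound n (A : 'M[C]_n) : adjmx A *m A = 1%:M -> mnorm A <= (n * n)%:R * 2.
Proof.
move=> h.
have := mnorm_le_entries (e := 1) (A := A); rewrite mulr1; apply => i j.
have e : complex.Re ((adjmx A *m A) j j) = 1 by rewrite h mxE eqxx.
move: e; rewrite mxE cRe_sum.
under eq_bigr do rewrite /adjmx !mxE Re_normsq.
rewrite (bigD1 i) //=.
have hr : 0 <= \sum_(i0 < n | i0 != i) (complex.Re (A i0 j) ^+ 2 + complex.Im (A i0 j) ^+ 2).
  by apply: sumr_ge0 => l _; apply: addr_ge0; apply: sqr_ge0.
move=> e.
have h1 : complex.Re (A i j) ^+ 2 <= 1.
  have := sqr_ge0 (complex.Im (A i j)); lra.
have h2 : complex.Im (A i j) ^+ 2 <= 1.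
  have := sqr_ge0 (complex.Re (A i j)); lra.
split; rewrite ler_norml; apply/andP; split; nra.
Qed.

Section Schr.
Variables (T : R) (n : nat) (H : R -> 'M[C]_n) (U : R -> 'M[C]_n).
Hypothesis hs : schrodinger_solution T H U.
Hypothesis hH : forall t, 0 < t < T -> adjmx (H t) = H t.

Lemma schr_der t : 0 < t < T -> mxder t U (- 'i *: (H t *m U t)).
Proof. by case: hs => _ [_ h] /h. Qed.

Lemma schr_cont : mxcont T U.
Proof. by case: hs => _ []. Qed.

Lemma schr0 : U 0 = 1%:M.
Proof. by case: hs. Qed.

Lemma schr_adj_der t : 0 < t < T ->
  mxder t (fun s => adjmx (U s)) ('i *: (adjmx (U t) *m H t)).
Proof.
move=> ht; have := mxder_adj (schr_der ht).
by rewrite adjmxZ adjmxM hH // conj_negi.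
Qed.

Lemma unitary_UU t : 0 <= t <= T -> adjmx (U t) *m U t = 1%:M.
Proof.
move=> ht.
have hc : mxcont T (fun s => adjmx (U s) *m U s).
  by apply: mxcont_mul; [apply: mxcont_adj|]; apply: schr_cont.
have := @mxder_const R T n n (fun s => adjmx (U s) *m U s) hc.
rewrite schr0 adjmx1 mulmx1 => -> //.
move=> s hs'.
apply: mxder_eq (mxder_mul (schr_adj_der hs') (schr_der hs')).
rewrite -scalemxAr -scalemxAl -mulmxA -scalerDl.
by rewrite addrC subrr scale0r.
Qed.

Lemma unitary_UU' t : 0 <= t <= T -> U t *m adjmx (U t) = 1%:M.
Proof. by move=> ht; apply: mulmx1C; apply: unitary_UU. Qed.

Lemma unitary_U t : 0 <= t <= T -> unitary_mx (U t).
Proof. by move=> ht; split; [apply: unitary_UU'|apply: unitary_UU]. Qed.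

Lemma U_bound t : 0 <= t <= T -> mnorm (U t) <= (n * n)%:R * 2.
Proof. by move=> ht; apply: unitary_bound; apply: unitary_UU. Qed.

Lemma U_commute (Q : 'M[C]_n) : (forall t, 0 < t < T -> H t *m Q = Q *m H t) ->
  forall t, 0 <= t <= T -> Q *m U t = U t *m Q /\ adjmx (U t) *m Q = Q *m adjmx (U t).
Proof.
move=> hQ t ht.
have hc : mxcont T (fun s => adjmx (U s) *m Q *m U s).
  apply: mxcont_mul; last exact: schr_cont.
  by apply: mxcont_mul; [apply: mxcont_adj; apply: schr_cont|apply: mxcont_cst].
have := @mxder_const R T n n (fun s => adjmx (U s) *m Q *m U s) hc.
rewrite schr0 adjmx1 mulmx1 mul1mx => e.
have {}e : adjmx (U t) *m Q *m U t = Q.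
  apply: e => // s hs'.
  have d1 := mxder_mul (schr_adj_der hs') (mxder_cst s Q).
  apply: mxder_eq (mxder_mul d1 (schr_der hs')).
  rewrite mulmx0 add0r -scalemxAr -!scalemxAl -!mulmxA.
  rewrite [H s *m (Q *m _)]mulmxA hQ // -[Q *m H s *m U s]mulmxA.
  by rewrite -scalerDl addNr scale0r.
split.
  by rewrite -[in RHS]e !mulmxA unitary_UU' // mul1mx.
by rewrite -[in RHS]e -!mulmxA unitary_UU' // mulmx1.
Qed.

End Schr.
End Unit.


Section Bnd.
Variable R : realType.
Local Notation C := R[i].

Lemma wc_bounded (T : R) (f : R -> R) : 0 <= T -> {within `[0, T], continuous f} ->
  exists b, 0 <= b /\ forall t, 0 <= t <= T -> `|f t| <= b.
Proof.
move=> T0 hf.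
have [c1 c1in h1] := EVT_max T0 hf.
have [c2 c2in h2] := EVT_min T0 hf.
exists (`|f c1| + `|f c2|); split; first by apply: addr_ge0.
move=> t ht; have tin : t \in `[0, T] by rewrite in_itv.
have a1 := h1 t tin; have a2 := h2 t tin.
have b1 := normr_ge0 (f c1); have b2 := normr_ge0 (f c2).
have d1 : f c1 <= `|f c1| by rewrite ler_norm.
have d2 : - f c2 <= `|f c2| by rewrite -normrN ler_norm.
rewrite ler_norml; apply/andP; split; lra.
Qed.

Lemma mxcont_bounded (T : R) m n (F : R -> 'M[C]_(m,n)) : 0 <= T -> mxcont T F ->
  exists M, 0 <= M /\ forall t, 0 <= t <= T -> mnorm (F t) <= M.
Proof.
move=> T0 hF.
have hb : forall x : 'I_m * 'I_n, exists b : R, 0 <= b /\ forall t, 0 <= t <= T ->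
    `|complex.Re (F t x.1 x.2)| <= b /\ `|complex.Im (F t x.1 x.2)| <= b.
  move=> [i j] /=; have [c1 c2] := hF i j.
  have [b1 [b10 hb1]] := wc_bounded T0 c1.
  have [b2 [b20 hb2]] := wc_bounded T0 c2.
  exists (b1 + b2); split; first by apply: addr_ge0.
  move=> t ht; have := hb1 t ht; have := hb2 t ht; lra.
have [bf hbf] := boolp.choice hb.
set e := \sum_x bf x.
have he : forall x, bf x <= e.
  move=> x; rewrite /e (bigD1 x) //= lerDl; apply: sumr_ge0 => y _.
  by case: (hbf y).
have e0 : 0 <= e by apply: sumr_ge0 => y _; case: (hbf y).
exists ((m * n)%:R * (2 * e)); split; first by apply: mulr_ge0 => //; apply: mulr_ge0.
move=> t ht; apply: mnorm_le_entries => i j.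
have [_ h] := hbf (i, j); have [h1 h2] := h t ht.
by split; apply: le_trans (he (i, j)).
Qed.

Lemma N_sum_le (n : nat) (N : 'M[C]_n -> R) (I : Type) (r : seq I) (P : pred I) (F : I -> 'M[C]_n) :
  unitarily_invariant_norm N ->
  N (\sum_(i <- r | P i) F i) <= \sum_(i <- r | P i) N (F i).
Proof.
case=> h0 _ hZ hD _.
elim/big_rec2: _ => [|i y1 y2 _ h].
  by have := hZ 0 0; rewrite scale0r => ->; rewrite ComplexField.Normc.normc0 mul0r.
by apply: le_trans (hD _ _) _; rewrite lerD2l.
Qed.

Lemma normc_le_sz (z : C) : ComplexField.Normc.normc z <= sz z.
Proof.
case: z => a b; rewrite /sz /= /ComplexField.Normc.normc.
have e : `|a| + `|b| = Num.sqrt ((`|a| + `|b|) ^+ 2).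
  by rewrite sqrtr_sqr (ger0_norm (addr_ge0 (normr_ge0 a) (normr_ge0 b))).
rewrite [X in _ <= X]e ler_sqrt; last exact: sqr_ge0.
have ea : a ^+ 2 = `|a| ^+ 2 by rewrite real_normK // num_real.
have eb : b ^+ 2 = `|b| ^+ 2 by rewrite real_normK // num_real.
rewrite ea eb.
have := normr_ge0 a; have := normr_ge0 b.
nra.
Qed.

Lemma N_le_mnorm n (N : 'M[C]_n -> R) : unitarily_invariant_norm N ->
  exists K, 0 <= K /\ forall A, N A <= K * mnorm A.
Proof.
move=> hN.
have hN' := hN; case: hN' => h0 _ hZ _ _.
exists (\sum_i \sum_j N (delta_mx i j)); split.
  by apply: sumr_ge0 => i _; apply: sumr_ge0 => j _.
move=> A; rewrite {1}(matrix_sum_delta A).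
apply: le_trans (N_sum_le _ _ _ hN) _.
apply: (@le_trans _ _ (\sum_i \sum_j sz (A i j) * N (delta_mx i j))).
  apply: ler_sum => i _; apply: le_trans (N_sum_le _ _ _ hN) _.
  apply: ler_sum => j _; rewrite hZ; apply: ler_wpM2r => //; exact: normc_le_sz.
rewrite /mnorm mulr_sumr; apply: ler_sum => i _.
rewrite mulr_sumr; apply: ler_sum => j _.
rewrite mulrC; apply: ler_wpM2r; first exact: sz_ge0.
rewrite (bigD1 i) //= (bigD1 j) //= -addrA lerDl.
by apply: addr_ge0; apply: sumr_ge0 => * //; apply: sumr_ge0 => *.
Qed.

End Bnd.


Section RingAlg.
Variable U : pzRingType.

Lemma Gring1 (A B q X HV HW s t : U) : t = - s -> (forall x, s * x = x * s) -> q * A = A * q ->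
  q*A*B*0 + (q*A*(t*(HV*B)) + (q*(s*(A*HW)) + 0*A)*B)*q + (A*X*B*0 + (A*X*(t*(HV*B)) + (A*0 + s*(A*HW)*X)*B)*q)
  = s*(A*(q*HW - q*HV + (HW*X - X*HV))*B*q).
Proof.
move=> -> hs hqA.
have hsl x y : x * (s * y) = s * (x * y) by rewrite mulrA -hs mulrA.
have hqA' z : q * (A * z) = A * (q * z) by rewrite mulrA hqA mulrA.
rewrite !mulr0 !mul0r !addr0 !add0r.
rewrite !(mulrDr, mulrDl, mulrN, mulNr) -!mulrA !hsl !hqA'.
set a := A * (q * (HV * (B * q))).
set b := A * (q * (HW * (B * q))).
set c := A * (X * (HV * (B * q))).
set d := A * (HW * (X * (B * q))).
by rewrite (addrC (- (s * a))) (addrC (- (s * c))).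
Qed.

Lemma zmodL1 (x y z w : U) : (x + y + z) - (x + y + w) = z - w.
Proof. by rewrite opprD addrACA subrr add0r. Qed.

Lemma ZL (w v a b d e f g : U) : b - f = v - w ->
  (w - v) + ((a + b + d) - (e + f + g)) = (a - e) + (d - g).
Proof.
move=> h.
have hb : b = f + (v - w) by rewrite -h addrC subrK.
have e1 : a + b + d = (a + d) + f + (v - w) by rewrite hb addrAC addrA.
have e2 : e + f + g = (e + g) + f by rewrite addrAC.
have e3 : (a + d) + f + (v - w) - ((e + g) + f) = (a + d) - (e + g) + (v - w).
  by rewrite (addrAC (a + d) f) opprD addrACA subrr addr0 addrAC.
rewrite e1 e2 e3 addrC -addrA -[w - v]opprB subrr addr0.
by rewrite opprD addrACA.
Qed.

Lemma Gring2 (q X H Y W V cc : U) : (forall x, cc * x = x * cc) ->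
  cc * (Y*X - X*Y) = q*V - W -> q*W = W ->
  q*(H + cc*Y + W) - q*(H + cc*Y + V) + ((H + cc*Y + W)*X - X*(H + cc*Y + V))
  = H*X - X*H + (W*X - X*V).
Proof.
move=> hs hk hqW.
rewrite !mulrDr !mulrDl zmodL1 hqW.
apply: ZL.
by rewrite -hk mulrBr !mulrA -hs.
Qed.

Lemma Bring (a b q : U) : b * a = q -> q * q = q ->
  (b - b*q)*(a - q*a) = -(q*(q*a - q) + (b*q - q)*q + (b*q - q)*(q*a - q)).
Proof.
move=> hba hqq.
have e1 : b * q * (q * a) = b * q * a by rewrite mulrA -(mulrA b q q) hqq.
have L : (b - b*q)*(a - q*a) = q - b*q*a.
  by rewrite mulrBl !mulrBr e1 subrr subr0 hba mulrA.
have Rr : q*(q*a - q) + (b*q - q)*q + (b*q - q)*(q*a - q) = b*q*a - q.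
  rewrite !mulrBr !mulrBl !mulrA hqq -(mulrA b q q) hqq.
  set v := b * q - q.
  by rewrite -addrA (addrC v) subrK addrC -addrA addKr.
by rewrite L Rr opprB.
Qed.

End RingAlg.

Section MatAlg.
Variable R : realType.
Local Notation C := R[i].
Variable n : nat.

Lemma scalar_mxNN (a : C) : (- a)%:M = - (a%:M : 'M[C]_n).
Proof. by apply/matrixP => i j; rewrite !mxE mulNrn. Qed.

Lemma scaleE (a : C) (M : 'M[C]_n) : a *: M = a%:M * M.
Proof. by rewrite -mul_scalar_mx. Qed.

Lemma Gder_M (A B q X HV HW : 'M[C]_n) (ii : C) : q *m A = A *m q ->
  q *m A *m B *m 0 + (q *m A *m (- ii *: (HV *m B)) + (q *m (ii *: (A *m HW)) + 0 *m A) *m B) *m q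
  + (A *m X *m B *m 0 + (A *m X *m (- ii *: (HV *m B)) + (A *m 0 + ii *: (A *m HW) *m X) *m B) *m q)
  = ii *: (A *m (q *m HW - q *m HV + (HW *m X - X *m HV)) *m B *m q).
Proof.
move=> hqA; rewrite !scaleE.
apply: (@Gring1 _ A B q X HV HW (ii%:M) ((- ii)%:M)) => //.
  exact: scalar_mxNN.
by move=> x; rewrite -[RHS]/(x *m ii%:M) scalar_mxC.
Qed.

Lemma Gder_M2 (q X H Y W V : 'M[C]_n) (c : C) :
  c *: (Y *m X - X *m Y) = q *m V - W -> q *m W = W ->
  q *m (H + c *: Y + W) - q *m (H + c *: Y + V) + ((H + c *: Y + W) *m X - X *m (H + c *: Y + V))
  = H *m X - X *m H + (W *m X - X *m V).
Proof.
rewrite !scaleE => hk hqW.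
apply: (@Gring2 _ q X H Y W V (c%:M)) => //.
by move=> x; rewrite -[RHS]/(x *m c%:M) scalar_mxC.
Qed.

Lemma Escale (H X0 W V : 'M[C]_n) (c : C) :
  H *m (c *: X0) - (c *: X0) *m H + (W *m (c *: X0) - (c *: X0) *m V) =
  c *: (H *m X0 - X0 *m H + (W *m X0 - X0 *m V)).
Proof. by rewrite -!scalemxAl -!scalemxAr !scalerDr !scalerN. Qed.

Lemma hk_gen (Y Z : 'M[C]_n) (c d : C) : c * d = 1 ->
  c *: (Y *m (d *: Z) - (d *: Z) *m Y) = Y *m Z - Z *m Y.
Proof. by move=> h; rewrite -scalemxAl -scalemxAr -scalerBr scalerA h scale1r. Qed.

Lemma G0_alg (q X : 'M[C]_n) : q *m q = q ->
  q *m adjmx (1%:M : 'M[C]_n) *m 1%:M *m q + adjmx (1%:M : 'M[C]_n) *m X *m 1%:M *m q = q + X *m q.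
Proof. by move=> hq; rewrite adjmx1 !mulmx1 mul1mx hq. Qed.

Lemma Delta_alg (q a b X : 'M[C]_n) :
  q *m (a *m b *m q) - q =
  (q *m a *m b *m q + a *m X *m b *m q - (q + X *m q)) + X *m q - a *m X *m b *m q.
Proof.
rewrite !mulmxA; set u := q *m a *m b *m q; set v := a *m X *m b *m q; set z := X *m q.
by rewrite opprD addrA subrK addrAC addrK.
Qed.

Lemma AdA_alg (w b q : 'M[C]_n) : w *m adjmx w = 1%:M -> adjmx b *m b = 1%:M ->
  adjmx q = q -> q *m q = q ->
  adjmx (adjmx w *m b *m q) *m (adjmx w *m b *m q) = q.
Proof.
move=> hw hb hq hqq; rewrite !adjmxM adjmxK hq.
by rewrite -!mulmxA (mulmxA w) hw mul1mx (mulmxA (adjmx b)) hb mul1mx hqq.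
Qed.

Lemma Bm_alg (a q : 'M[C]_n) : adjmx q = q -> q *m q = q -> adjmx a *m a = q ->
  adjmx (a - q *m a) *m (a - q *m a) =
  - (q *m (q *m a - q) + adjmx (q *m a - q) *m q + adjmx (q *m a - q) *m (q *m a - q)).
Proof. by move=> hq hqq hba; rewrite !adjmxB adjmxM hq; exact: (Bring hba hqq). Qed.

Lemma UVW_alg (b w q : 'M[C]_n) : w *m adjmx w = 1%:M ->
  (b - w) *m q = w *m (adjmx w *m b *m q - q).
Proof. by move=> hw; rewrite mulmxBr !mulmxA hw mul1mx mulmxBl. Qed.

Lemma AmB_alg (a q : 'M[C]_n) : a - q *m a + (q *m a - q) = a - q.
Proof. by rewrite addrA subrK. Qed.

End MatAlg.


Section SqB.
Variable R : realType.
Local Notation C := R[i].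
Lemma mnorm_sq m (B : 'M[C]_(m,m)) (s : R) : 0 <= s ->
  mnorm (adjmx B *m B) <= s ^+ 2 -> mnorm B <= (m * m)%:R * (2 * s).
Proof.
move=> s0 h; apply: mnorm_le_entries => i j.
have e : complex.Re ((adjmx B *m B) j j) =
    \sum_l (complex.Re (B l j) ^+ 2 + complex.Im (B l j) ^+ 2).
  by rewrite mxE cRe_sum; apply: eq_bigr => l _; rewrite /adjmx !mxE Re_normsq.
have hr := Re_le_mnorm (adjmx B *m B) j j.
have hs : complex.Re (B i j) ^+ 2 + complex.Im (B i j) ^+ 2 <= complex.Re ((adjmx B *m B) j j).
  rewrite e (bigD1 i) //= lerDl.
  by apply: sumr_ge0 => l _; apply: addr_ge0; apply: sqr_ge0.
have hn := ler_norm (complex.Re ((adjmx B *m B) j j)).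
have q1 := sqr_ge0 (complex.Re (B i j)); have q2 := sqr_ge0 (complex.Im (B i j)).
have h1 : complex.Re (B i j) ^+ 2 <= s ^+ 2 by lra.
have h2 : complex.Im (B i j) ^+ 2 <= s ^+ 2 by lra.
by split; rewrite ler_norml; apply/andP; split; nra.
Qed.
End SqB.

Section Main.
Variables (R : realType) (dS dB k : nat) (T : R)
    (HSbar : R -> 'M[R[i]]_dS) (HB : 'M[R[i]]_dB) (Hp : 'M[R[i]]_dS)
    (lam : 'I_k -> R) (Pi : 'I_k -> 'M[R[i]]_dS)
    (V : 'M[R[i]]_(dS * dB)) (I : {set 'I_k}).
Local Notation C := R[i].
Local Notation n := (dS * dB)%N.
Local Notation L := (@liftS R dS dB).
Local Notation P := (\sum_(a in I) Pi a).
Local Notation W := (\sum_(a in I) (L (Pi a) *m V *m L (Pi a))).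
Local Notation p := (L P).

Hypotheses (hT : 0 < T) (hcont : mx_continuous_on T HSbar)
  (hHS : forall t, 0 <= t <= T -> hermitian_mx (HSbar t))
  (hHB : hermitian_mx HB) (hsp : spectral_decomposition Hp lam Pi)
  (hV : hermitian_mx V)
  (hcomm : forall t, 0 <= t <= T ->
     HSbar t *m P = P *m HSbar t /\ HSbar t *m Hp = Hp *m HSbar t).

Definition H0 (t : R) : 'M[C]_n := L (HSbar t) + liftB HB.

Lemma in01 t : 0 < t < T -> 0 <= t <= T.
Proof. by case/andP => h1 h2; rewrite !ltW. Qed.

Lemma mxcont_liftS (F : R -> 'M[C]_dS) : mxcont T F -> mxcont T (fun t => L (F t)).
Proof.
move=> hF i j.
have -> : (fun t => L (F t) i j) = (fun t => F t (mxtens_unindex i).1 (mxtens_unindex j).1 *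
            (1%:M : 'M[C]_dB) (mxtens_unindex i).2 (mxtens_unindex j).2).
  by apply: funext => t; rewrite liftSE.
by apply: ccont_mul; [apply: hF|apply: ccont_cst].
Qed.

Lemma H0_cont : mxcont T H0.
Proof. by rewrite /H0; apply: mxcont_add; [apply: mxcont_liftS|apply: mxcont_cst]. Qed.

Lemma H0_bound : exists Mh, 0 <= Mh /\ forall t, 0 <= t <= T -> mnorm (H0 t) <= Mh.
Proof. by apply: mxcont_bounded; [apply: ltW|apply: H0_cont]. Qed.

Lemma conj_realC (x : R) : Num.conj (x%:C) = x%:C :> C.
Proof. change (conjc (x%:C) = x%:C :> C). by rewrite /= oppr0. Qed.

Lemma H0_adj t : 0 <= t <= T -> adjmx (H0 t) = H0 t.
Proof. by move=> ht; rewrite /H0 adjmxD liftS_adj liftB_adj hHS // hHB. Qed.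

Lemma Hp_adj : adjmx Hp = Hp.
Proof.
case: (hsp) => _ _ _ _ ->; rewrite adjmx_sum; apply: eq_bigr => a _.
by rewrite adjmxZ conj_realC (Pi_adj hsp).
Qed.

Lemma HV_adj (Ep : R) t : 0 <= t <= T ->
  adjmx (H0 t + (Ep%:C) *: L Hp + V) = H0 t + (Ep%:C) *: L Hp + V.
Proof. by move=> ht; rewrite /H0 !adjmxD adjmxZ !liftS_adj liftB_adj hHS // hHB conj_realC Hp_adj hV. Qed.

Lemma HW_adj (Ep : R) t : 0 <= t <= T ->
  adjmx (H0 t + (Ep%:C) *: L Hp + W) = H0 t + (Ep%:C) *: L Hp + W.
Proof. by move=> ht; rewrite /H0 !adjmxD adjmxZ !liftS_adj liftB_adj hHS // hHB conj_realC Hp_adj (W_adj I hsp hV). Qed.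

Lemma HW_comm (Ep : R) t : 0 <= t <= T ->
  (H0 t + (Ep%:C) *: L Hp + W) *m p = p *m (H0 t + (Ep%:C) *: L Hp + W).
Proof.
move=> ht; have [c1 _] := hcomm ht.
rewrite /H0 !mulmxDl !mulmxDr -scalemxAl -scalemxAr.
rewrite -!liftSM c1 (HpP I hsp) (pW V I hsp) (Wp V I hsp).
by rewrite liftBS_comm.
Qed.


Section FixedEp.
Variables (Mh : R) (Ep : R) (UV UW : R -> 'M[C]_n).
Hypotheses (hMh0 : 0 <= Mh) (hMh : forall t, 0 <= t <= T -> mnorm (H0 t) <= Mh)
  (hEp : 0 < Ep)
  (hUV : schrodinger_solution T (fun t => H0 t + (Ep%:C) *: L Hp + V) UV)
  (hUW : schrodinger_solution T (fun t => H0 t + (Ep%:C) *: L Hp + W) UW).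

Let hHV : forall t, 0 < t < T -> adjmx ((fun t => H0 t + (Ep%:C) *: L Hp + V) t) =
  (fun t => H0 t + (Ep%:C) *: L Hp + V) t.
Proof. by move=> t ht; apply: HV_adj; apply: in01. Qed.
Let hHW : forall t, 0 < t < T -> adjmx ((fun t => H0 t + (Ep%:C) *: L Hp + W) t) =
  (fun t => H0 t + (Ep%:C) *: L Hp + W) t.
Proof. by move=> t ht; apply: HW_adj; apply: in01. Qed.

Lemma UW_comm t : 0 <= t <= T -> p *m UW t = UW t *m p /\ adjmx (UW t) *m p = p *m adjmx (UW t).
Proof.
apply: (U_commute hUW hHW) => s hs.
exact: HW_comm (in01 hs).
Qed.

Definition X : 'M[C]_n := (Ep^-1)%:C *: Xh lam Pi V I.
Definition G (t : R) : 'M[C]_n :=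
  p *m adjmx (UW t) *m UV t *m p + adjmx (UW t) *m X *m UV t *m p.
Definition E (t : R) : 'M[C]_n := H0 t *m X - X *m H0 t + (W *m X - X *m V).

Lemma G_cont : mxcont T G.
Proof.
have cV := schr_cont hUV; have cW := schr_cont hUW.
have cWa := mxcont_adj cW.
have cp := mxcont_cst T p; have cX := mxcont_cst T X.
apply: mxcont_add.
  exact: mxcont_mul (mxcont_mul (mxcont_mul cp cWa) cV) cp.
exact: mxcont_mul (mxcont_mul (mxcont_mul cWa cX) cV) cp.
Qed.

Lemma hkX : (Ep%:C) *: (L Hp *m X - X *m L Hp) = p *m V - W.
Proof.
rewrite /X hk_gen; first exact: Xh_key.
rewrite -rmorphM /= mulfV ?lt0r_neq0 //.
Qed.

Lemma G_der t : 0 < t < T -> mxder t G ('i *: (adjmx (UW t) *m E t *m UV t *m p)).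
Proof.
move=> ht.
have dV := schr_der hUV ht; have dW := schr_adj_der hUW hHW ht.
have d1 := mxder_mul (mxder_mul (mxder_mul (mxder_cst t p) dW) dV) (mxder_cst t p).
have d2 := mxder_mul (mxder_mul (mxder_mul dW (mxder_cst t X)) dV) (mxder_cst t p).
apply: mxder_eq (mxder_add d1 d2).
have hqA : p *m adjmx (UW t) = adjmx (UW t) *m p := esym (UW_comm (in01 ht)).2.
apply: eq_trans (Gder_M (UV t) X (H0 t + (Ep%:C) *: L Hp + V) (H0 t + (Ep%:C) *: L Hp + W) 'i hqA) _.
by rewrite (Gder_M2 (H0 t) hkX (pW V I hsp)).
Qed.

Definition mu : R := (n * n)%:R * 2.
Definition KE : R := 2 * Mh * mnorm (Xh lam Pi V I) + mnorm W * mnorm (Xh lam Pi V I)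
  + mnorm (Xh lam Pi V I) * mnorm V.

Lemma sz_real (x : R) : sz (x%:C) = `|x|.
Proof. by rewrite /sz /= normr0 addr0. Qed.

Lemma E_bound t : 0 <= t <= T -> mnorm (E t) <= Ep^-1 * KE.
Proof.
move=> ht; rewrite /E /X Escale.
apply: le_trans (mnormZ _ _) _.
rewrite sz_real ger0_norm; last by rewrite invr_ge0 ltW.
apply: ler_wpM2l; first by rewrite invr_ge0 ltW.
set xh := Xh lam Pi V I.
have h1 : mnorm (H0 t *m xh) <= Mh * mnorm xh.
  exact: le_trans (mnormM _ _) (ler_wpM2r (mnorm_ge0 _) (hMh ht)).
have h2 : mnorm (xh *m H0 t) <= mnorm xh * Mh.
  exact: le_trans (mnormM _ _) (ler_wpM2l (mnorm_ge0 _) (hMh ht)).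
have h3 := mnormM W xh; have h4 := mnormM xh V.
have h5 := mnormD (H0 t *m xh - xh *m H0 t) (W *m xh - xh *m V).
have h6 := mnormB (H0 t *m xh) (xh *m H0 t).
have h7 := mnormB (W *m xh) (xh *m V).
rewrite /KE; lra.
Qed.

Lemma sz_i : sz ('i : C) = 1.
Proof. by rewrite /sz /= normr0 normr1 add0r. Qed.

Definition KG : R := mu * KE * mu * mnorm p.

Lemma Gd_bound t : 0 < t < T ->
  mnorm ('i *: (adjmx (UW t) *m E t *m UV t *m p)) <= Ep^-1 * KG.
Proof.
move=> ht.
apply: le_trans (mnormZ _ _) _; rewrite sz_i mul1r.
have hA : mnorm (adjmx (UW t)) <= mu by rewrite mnorm_adj; exact: (U_bound hUW hHW (in01 ht)).
have hB : mnorm (UV t) <= mu by exact: (U_bound hUV hHV (in01 ht)).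
have hE := E_bound (in01 ht).
set A := adjmx (UW t); set B := UV t.
have e1 := mnormM (A *m E t *m B) p.
have e2 := mnormM (A *m E t) B.
have e3 := mnormM A (E t).
have b1 : mnorm A * mnorm (E t) <= mu * (Ep^-1 * KE).
  by apply: ler_pM => //; apply: mnorm_ge0.
have b2 : mnorm (A *m E t) * mnorm B <= mu * (Ep^-1 * KE) * mu.
  apply: ler_pM => //; try apply: mnorm_ge0.
  exact: le_trans e3 b1.
have b3 : mnorm (A *m E t *m B) * mnorm p <= mu * (Ep^-1 * KE) * mu * mnorm p.
  apply: ler_wpM2r; first exact: mnorm_ge0.
  exact: le_trans e2 b2.
apply: le_trans e1 _; apply: le_trans b3 _.
by rewrite /KG le_eqVlt; apply/orP; left; apply/eqP; ring.
Qed.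

Lemma G_diff : mnorm (G T - G 0) <= (n * n)%:R * (2 * (Ep^-1 * KG * T)).
Proof.
apply: (mxder_bound G_cont (fun t ht => G_der ht) (fun t ht => Gd_bound ht)).
by rewrite lexx ltW.
Qed.

Definition Am : 'M[C]_n := adjmx (UW T) *m UV T *m p.

Definition K1 : R := (n * n)%:R * (2 * (KG * T)) + mnorm (Xh lam Pi V I) * mnorm p
  + mu * mnorm (Xh lam Pi V I) * mu * mnorm p.

Lemma G0E : G 0 = p + X *m p.
Proof. by rewrite /G (schr0 hUW) (schr0 hUV); apply: G0_alg; exact: (pp dB I hsp). Qed.

Lemma Delta_bound : mnorm (p *m Am - p) <= Ep^-1 * K1.
Proof.
have e : p *m Am - p = (G T - G 0) + X *m p - adjmx (UW T) *m X *m UV T *m p.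
  by rewrite G0E; exact: Delta_alg.
rewrite e.
have hT' : 0 <= T <= T by rewrite lexx ltW.
have hA : mnorm (adjmx (UW T)) <= mu by rewrite mnorm_adj; exact: (U_bound hUW hHW hT').
have hB : mnorm (UV T) <= mu by exact: (U_bound hUV hHV hT').
have hX : mnorm X <= Ep^-1 * mnorm (Xh lam Pi V I).
  apply: le_trans (mnormZ _ _) _; rewrite sz_real ger0_norm // invr_ge0 ltW //.
have hG := G_diff.
have f1 := mnormB (G T - G 0 + X *m p) (adjmx (UW T) *m X *m UV T *m p).
have f2 := mnormD (G T - G 0) (X *m p).
have f3 : mnorm (X *m p) <= Ep^-1 * mnorm (Xh lam Pi V I) * mnorm p.
  apply: le_trans (mnormM _ _) _; apply: ler_wpM2r => //; exact: mnorm_ge0.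
have g1 : mnorm (adjmx (UW T) *m X) <= mu * (Ep^-1 * mnorm (Xh lam Pi V I)).
  exact: le_trans (mnormM _ _) (ler_pM (mnorm_ge0 _) (mnorm_ge0 _) hA hX).
have g2 : mnorm (adjmx (UW T) *m X *m UV T) <= mu * (Ep^-1 * mnorm (Xh lam Pi V I)) * mu.
  exact: le_trans (mnormM _ _) (ler_pM (mnorm_ge0 _) (mnorm_ge0 _) g1 hB).
have f4 : mnorm (adjmx (UW T) *m X *m UV T *m p) <=
    mu * (Ep^-1 * mnorm (Xh lam Pi V I)) * mu * mnorm p.
  exact: le_trans (mnormM _ _) (ler_wpM2r (mnorm_ge0 _) g2).
have -> : Ep^-1 * K1 = (n * n)%:R * (2 * (Ep^-1 * KG * T)) +
   Ep^-1 * mnorm (Xh lam Pi V I) * mnorm p + mu * (Ep^-1 * mnorm (Xh lam Pi V I)) * mu * mnorm p.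
  by rewrite /K1; ring.
lra.
Qed.

Definition Kc : R := (n * n)%:R * (2 * (2 * mnorm p + 1)) + 1.

Lemma core_bound (N : 'M[C]_n -> R) (K : R) : unitarily_invariant_norm N -> 0 <= K ->
  (forall A, N A <= K * mnorm A) ->
  forall d : R, 0 < d <= 1 -> Ep^-1 * K1 <= d ^+ 2 ->
  N ((UV T - UW T) *m p) <= K * (Kc * d).
Proof.
move=> hN K0 hK d /andP[d0 d1] hd.
have hT' : 0 <= T <= T by rewrite lexx ltW.
have hw := unitary_UU' hUW hHW hT'.
have hb := unitary_UU hUV hHV hT'.
have hq := p_adj dB I hsp; have hqq := pp dB I hsp.
have hAA : adjmx Am *m Am = p := AdA_alg hw hb hq hqq.
have hD : mnorm (p *m Am - p) <= d ^+ 2 := le_trans Delta_bound hd.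
have hBB := Bm_alg hq hqq hAA.
set D := p *m Am - p in hD hBB.
set mp := mnorm p.
have mp0 : 0 <= mp by apply: mnorm_ge0.
have mD0 : 0 <= mnorm D by apply: mnorm_ge0.
have hB2 : mnorm (adjmx (Am - p *m Am) *m (Am - p *m Am)) <= ((2 * mp + 1) * d) ^+ 2.
  rewrite hBB mnormN.
  have a1 := mnormD (p *m D + adjmx D *m p) (adjmx D *m D).
  have a2 := mnormD (p *m D) (adjmx D *m p).
  have a3 := mnormM p D; have a4 := mnormM (adjmx D) p; have a5 := mnormM (adjmx D) D.
  rewrite mnorm_adj in a4 a5.
  have b3 : mp * mnorm D <= mp * d ^+ 2 by apply: ler_wpM2l.
  have b4 : mnorm D * mp <= d ^+ 2 * mp by apply: ler_wpM2r.
  have b5 : mnorm D * mnorm D <= d ^+ 2 * d ^+ 2 by apply: ler_pM.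
  have d2 : d ^+ 2 <= 1 by rewrite expr2; nra.
  have d4 : d ^+ 2 * d ^+ 2 <= d ^+ 2 by nra.
  have hl : (2 * mp + 1) * d ^+ 2 <= ((2 * mp + 1) * d) ^+ 2.
    rewrite exprMn !expr2.
    have := mulr_ge0 (ltW d0) (ltW d0); nra.
  have c1 : mnorm (p *m D + adjmx D *m p + adjmx D *m D) <=
      mp * d ^+ 2 + d ^+ 2 * mp + d ^+ 2 * d ^+ 2.
    apply: le_trans a1 _.
    apply: lerD; last exact: le_trans a5 b5.
    apply: le_trans a2 _; apply: lerD; [exact: le_trans a3 b3|exact: le_trans a4 b4].
  apply: le_trans c1 _; apply: le_trans _ hl.
  have -> : (2 * mp + 1) * d ^+ 2 = mp * d ^+ 2 + d ^+ 2 * mp + d ^+ 2 by ring.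
  by rewrite lerD2l.
have s0 : 0 <= (2 * mp + 1) * d by apply: mulr_ge0; lra.
have hBm := mnorm_sq s0 hB2.
have e1 : (UV T - UW T) *m p = UW T *m (Am - p) *m 1%:M by rewrite mulmx1; exact: UVW_alg.
rewrite e1.
case: (hN) => _ _ _ _ hinv.
have u1 := unitary_U hUW hHW hT'.
have u2 : unitary_mx (1%:M : 'M[C]_n) by split; rewrite adjmx1 mulmx1.
rewrite hinv //.
apply: le_trans (hK _) _; apply: ler_wpM2l => //.
rewrite -(AmB_alg Am p) -/D.
apply: le_trans (mnormD _ _) _.
have dd : d ^+ 2 <= d by rewrite expr2; nra.
rewrite /Kc -/mp.
set nn := (n * n)%:R in hBm *.
have nn0 : 0 <= nn by rewrite /nn ler0n.
nra.
Qed.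

End FixedEp.
End Main.


Theorem theorem2 (R : realType) (dS dB k : nat) (T : R)
    (HSbar : R -> 'M[R[i]]_dS) (HB : 'M[R[i]]_dB) (Hp : 'M[R[i]]_dS)
    (lam : 'I_k -> R) (Pi : 'I_k -> 'M[R[i]]_dS)
    (V : 'M[R[i]]_(dS * dB)) (I : {set 'I_k})
    (N : 'M[R[i]]_(dS * dB) -> R)
    (UV UW : R -> R -> 'M[R[i]]_(dS * dB)) :
  0 < T ->
  mx_continuous_on T HSbar ->
  (forall t, 0 <= t <= T -> hermitian_mx (HSbar t)) ->
  hermitian_mx HB ->
  hermitian_mx Hp ->
  spectral_decomposition Hp lam Pi ->
  hermitian_mx V ->
  let P : 'M[R[i]]_dS := \sum_(a in I) Pi a in
  let W : 'M[R[i]]_(dS * dB) :=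
    \sum_(a in I) (liftS (Pi a) *m V *m liftS (Pi a)) in
  (forall t, 0 <= t <= T ->
     HSbar t *m P = P *m HSbar t /\ HSbar t *m Hp = Hp *m HSbar t) ->
  let H0 := fun t => liftS (HSbar t) + liftB HB : 'M[R[i]]_(dS * dB) in
  (forall Ep : R, 0 < Ep -> schrodinger_solution T
     (fun t => H0 t + (Ep%:C) *: liftS Hp + V) (UV Ep)) ->
  (forall Ep : R, 0 < Ep -> schrodinger_solution T
     (fun t => H0 t + (Ep%:C) *: liftS Hp + W) (UW Ep)) ->
  unitarily_invariant_norm N ->
  N ((UV Ep T - UW Ep T) *m liftS P) @[Ep --> +oo] --> 0.
Proof.
move=> hT hcont hHS hHB hHp hsp hV P W hcomm H0 hUV hUW hN.
have [Mh [Mh0 hMh]] := H0_bound HB hT hcont.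
have [K [K0 hK]] := N_le_mnorm hN.
set K1c := K1 T lam Pi V I Mh.
set Kcc := Kc dB Pi I.
have Kc0 : 0 <= Kcc.
  rewrite /Kcc /Kc; apply: addr_ge0 => //; apply: mulr_ge0 => //; apply: mulr_ge0 => //.
  by apply: addr_ge0 => //; apply: mulr_ge0 => //; apply: mnorm_ge0.
apply/cvgrPdist_le => eps eps0.
set d := Num.min 1 (eps / (K * Kcc + 1)).
have KK0 : 0 < K * Kcc + 1 by have := mulr_ge0 K0 Kc0; lra.
have d0 : 0 < d by rewrite /d lt_min ltr01 /= divr_gt0.
have d1 : d <= 1 by rewrite /d ge_min lexx.
have d2 : d <= eps / (K * Kcc + 1) by rewrite /d ge_min lexx orbT.
have hfin : K * (Kcc * d) <= eps.
  have : d * (K * Kcc + 1) <= eps by rewrite -ler_pdivlMr.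
  have := mulr_ge0 K0 Kc0; nra.
near=> Ep.
rewrite sub0r normrN ger0_norm; last by case: hN.
have Ep0 : 0 < Ep by near: Ep; apply: nbhs_pinfty_gt; rewrite num_real.
have EpM : K1c / d ^+ 2 < Ep by near: Ep; apply: nbhs_pinfty_gt; rewrite num_real.
apply: le_trans hfin.
apply: (core_bound hT hHS hHB hsp hV hcomm hMh Ep0 (hUV Ep Ep0) (hUW Ep Ep0) hN K0 hK).
  by rewrite d0 d1.
rewrite -/K1c.
have dd : 0 < d ^+ 2 by rewrite exprn_gt0.
rewrite ltr_pdivrMr // in EpM.
rewrite mulrC ler_pdivrMr // mulrC; exact: ltW.
Unshelve. all: by end_near.
Qed.
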